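(* Let $m\ge 2$ and $n\ge 2$ be integers. Let $\mathrm{AGL}_{n-1}(\mathbb{Z}_m)\subset GL_n(\mathbb{Z}_m)$ be the group of matrices $g(A,v)=\begin{pmatrix}A&v\\0&1\end{pmatrix}$ with $A\in GL_{n-1}(\mathbb{Z}_m)$ and $v\in\mathbb{Z}_m^{n-1}$ a column vector. Fix a standard basis vector $e_i\in\mathbb{Z}_m^{n-1}$ and let $B=g(I,e_i)$. Then $\mathrm{AGL}_{n-1}(\mathbb{Z}_m)$ is generated by $B$ together with the matrices $g(E_{k,l}(1),0)$ for all $1\le k\neq l\le n-1$ and $g(D(\alpha,1),0)$ for all $\alpha\in\mathbb{Z}_m^\times$.
   Context: For $k\neq l$, $\Delta_{k,l}$ denotes the $(n-1)\times(n-1)$ matrix with $(k,l)$-entry $1$ and all other entries $0$ (and $\Delta_{k,k}$ the matrix with $(k,k)$-entry $1$, others $0$); $E_{k,l}(\alpha)=I+\alpha\Delta_{k,l}$; $D(\alpha,k)=I+(\alpha-1)\Delta_{k,k}$, the diagonal matrix with $(k,k)$-entry $\alpha$ and other diagonal entries $1$. Multiplication in $\mathrm{AGL}_{n-1}(\mathbb{Z}_m)$ is $g(A_1,v_1)g(A_2,v_2)=g(A_1A_2,A_1v_2+v_1)$. *)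

(* Defs.v *)
From HB Require Import structures.
From mathcomp Require Import all_boot all_order all_algebra all_fingroup.
Set Implicit Arguments. Unset Strict Implicit. Unset Printing Implicit Defensive.
Import GRing.Theory.
Local Open Scope ring_scope.

(* Matrices of size k (here k = n-1), entries indexed 0-based. *)
Section Affine.
Variable R : pzRingType.

(* entry (i,j) of A, as a function of natural indices (0 outside range) *)
Definition mx_at k l (A : 'M[R]_(k, l)) (i j : nat) : R :=
  match @insub nat (fun x => x < k)%N _ i, @insub nat (fun x => x < l)%N _ j with
  | Some i', Some j' => A i' j'
  | _, _ => 0
  end.

(* g(A,v) = [[A, v],[0, 1]] as a (k+1) x (k+1) matrix *)
Definition gmx k (A : 'M[R]_k) (v : 'cV[R]_k) : 'M[R]_k.+1 :=
  \matrix_(i < k.+1, j < k.+1)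
    if (i < k)%N then
      (if (j < k)%N then mx_at A i j
       else mx_at v i 0)
    else (if (j == k :> nat) then 1 else 0).

(* Delta_{k,l}: 0-based indices (paper's index k corresponds to k-1 here) *)
Definition Delta k (a b : nat) : 'M[R]_k :=
  \matrix_(i < k, j < k) (((i == a :> nat) && (j == b :> nat))%:R : R).

Definition Emx k (a b : nat) (alpha : R) : 'M[R]_k := 1%:M + alpha *: Delta k a b.
Definition Dmx k (alpha : R) (a : nat) : 'M[R]_k := 1%:M + (alpha - 1) *: Delta k a a.

Definition evec k (i : 'I_k) : 'cV[R]_k := delta_mx i 0.
End Affine.

Definition AGL (m n : nat) : {set {'GL_n['Z_m]}} :=
  [set x | [exists A : 'M['Z_m]_(n.-1), exists v : 'cV['Z_m]_(n.-1),
             (A \in unitmx) && (GLval x == gmx A v)]].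

Definition AGL_gens (m n : nat) (i : 'I_(n.-1)) : {set {'GL_n['Z_m]}} :=
  [set x | (GLval x == gmx 1%:M (@evec 'Z_m _ i))
        || [exists k : 'I_(n.-1), exists l : 'I_(n.-1),
              (k != l) && (GLval x == gmx (@Emx 'Z_m (n.-1) k l 1) 0)]
        || [exists alpha : 'Z_m, (alpha \is a GRing.unit)
              && (GLval x == gmx (@Dmx 'Z_m (n.-1) alpha 0%N) 0)]].

(* Main.v *)
Require Import Defs.
From mathcomp Require Import all_boot all_order all_algebra all_fingroup.
Set Implicit Arguments. Unset Strict Implicit. Unset Printing Implicit Defensive.
Import GRing.Theory.
Local Open Scope ring_scope.

Section G.
Variable R : comPzRingType.

Lemma mx_atE k l (A : 'M[R]_(k, l)) (i : 'I_k) (j : 'I_l) : mx_at A i j = A i j.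
Proof. by rewrite /mx_at !valK. Qed.

Lemma mx_at_out k l (A : 'M[R]_(k, l)) i j : (k <= i)%N -> mx_at A i j = 0.
Proof. by move=> h; rewrite /mx_at insubF // ltnNge h. Qed.

Lemma mx_at_outr k l (A : 'M[R]_(k, l)) i j : (l <= j)%N -> mx_at A i j = 0.
Proof. by move=> h; rewrite /mx_at; case: insub => // ?; rewrite insubF // ltnNge h. Qed.

Lemma mx_atD k l (A B : 'M[R]_(k, l)) i j : mx_at (A + B) i j = mx_at A i j + mx_at B i j.
Proof.
rewrite /mx_at; case: insubP => [i' _ _|_]; last by rewrite addr0.
by case: insubP => [j' _ _|_]; rewrite ?mxE ?addr0.
Qed.

Lemma mx_atM k l p (A : 'M[R]_(k, l)) (B : 'M[R]_(l, p)) i j :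
  mx_at (A *m B) i j = \sum_(q < l) mx_at A i q * mx_at B q j.
Proof.
case: (ltnP i k) => hi; last by rewrite mx_at_out // big1 // => q _; rewrite mx_at_out // mul0r.
case: (ltnP j p) => hj; last by rewrite mx_at_outr // big1 // => q _; rewrite (mx_at_outr B) // mulr0.
have -> : i = Ordinal hi by []. have -> : j = Ordinal hj by [].
by rewrite mx_atE mxE; apply: eq_bigr => q _; rewrite !mx_atE.
Qed.

Lemma mx_at_ord k l (A : 'M[R]_(k, l)) i j (hi : (i < k)%N) (hj : (j < l)%N) :
  mx_at A i j = A (Ordinal hi) (Ordinal hj).
Proof. by rewrite -mx_atE. Qed.

Lemma mx_at0 k l i j : mx_at (0 : 'M[R]_(k, l)) i j = 0.
Proof. by rewrite /mx_at; case: insub => // ?; case: insub => // ?; rewrite mxE. Qed.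

Variable k : nat.
Lemma gmxM (A B : 'M[R]_k) (v w : 'cV[R]_k) :
  gmx A v *m gmx B w = gmx (A *m B) (A *m w + v).
Proof.
apply/matrixP => i j; rewrite !mxE big_ord_recr /= !mxE /= ltnn eqxx.
under eq_bigr => q _ do rewrite !mxE /= ltn_ord.
have [hj|hj] := ltnP j k.
  rewrite (ltn_eqF hj) mulr0 addr0.
  case: ifP => hi; last by rewrite big1 // => q _; rewrite (ltn_eqF (ltn_ord q)) mul0r.
  by rewrite mx_atM.
have -> : j == k :> nat by rewrite eqn_leq hj -ltnS ltn_ord.
rewrite mulr1; case: ifP => hi; last by rewrite big1 ?add0r // => q _; rewrite (ltn_eqF (ltn_ord q)) mul0r.
by rewrite mx_atD mx_atM.
Qed.

Lemma gmx1 : gmx (1%:M : 'M[R]_k) 0 = 1%:M.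
Proof.
apply/matrixP => i j; rewrite !mxE.
have [hi|hi] := ltnP i k; last first.
  have ei : (i : nat) = k by apply/eqP; rewrite eqn_leq hi -ltnS ltn_ord.
  by rewrite -(inj_eq val_inj) /= ei eq_sym; case: (_ == _).
have [hj|hj] := ltnP j k; last first.
  rewrite mx_at0 -(inj_eq val_inj) /= ltn_eqF //; exact: leq_trans hi hj.
by rewrite (mx_at_ord _ hi hj) mxE.
Qed.
End G.
Section Elim.
Variable R : comUnitRingType.
Variable k' : nat.
Local Notation k := k'.+1.
Implicit Types (A : 'M[R]_k).

Lemma DeltaM (a b : 'I_k) A r c : (Delta R k a b *m A) r c = if r == a then A b c else 0.
Proof.
rewrite mxE (bigD1 b) //= mxE eqxx andbT big1 ?addr0.
  case: (r =P a) => [->|/eqP h]; first by rewrite !eqxx mul1r.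
  have h' : (r : nat) != a := h. by rewrite (negbTE h') mul0r.
move=> q hq; rewrite mxE; have := hq; rewrite -(inj_eq val_inj) /= => /negbTE ->.
by rewrite andbF mul0r.
Qed.

Lemma EmxE (a b : 'I_k) t A r c :
  (Emx k a b t *m A) r c = A r c + (if r == a then t * A b c else 0).
Proof.
rewrite /Emx mulmxDl mul1mx -scalemxAl mxE mxE DeltaM.
by case: (r == a); rewrite ?mulr0.
Qed.

Lemma DmxE (a : 'I_k) u A r c :
  (Dmx k u a *m A) r c = if r == a then u * A r c else A r c.
Proof.
rewrite /Dmx mulmxDl mul1mx -scalemxAl mxE mxE DeltaM.
case: eqP => [->|]; last by rewrite mulr0 addr0.
by rewrite mulrBl mul1r addrC subrK.
Qed.

Lemma EE (a b : 'I_k) s t A : a != b ->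
  Emx k a b s *m (Emx k a b t *m A) = Emx k a b (s + t) *m A.
Proof.
move=> ab; apply/matrixP => r c; rewrite !EmxE.
have -> : (b == a) = false by rewrite eq_sym (negbTE ab).
by case: (r == a); rewrite ?addr0 // -addrA mulrDl [s * _ + _]addrC.
Qed.

Lemma E0 (a b : 'I_k) A : Emx k a b 0 *m A = A.
Proof. by apply/matrixP => r c; rewrite EmxE mul0r; case: (r == a); rewrite addr0. Qed.

Lemma Eunit (a b : 'I_k) t A : a != b -> (Emx k a b t *m A \in unitmx) = (A \in unitmx).
Proof.
move=> ab; rewrite unitmx_mul.
suff -> : Emx k a b t \in unitmx by [].
have h : Emx k a b t *m Emx k a b (- t) = 1%:M.
  by rewrite -[Emx k a b (- t)]mulmx1 EE // subrr E0.
by case/mulmx1_unit: h.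
Qed.

Lemma DmxE0 u A r c :
  (Dmx k u 0 *m A) r c = if r == ord0 then u * A r c else A r c.
Proof. exact: (DmxE ord0). Qed.

Lemma DD u A : u \is a GRing.unit -> Dmx k u 0 *m (Dmx k u^-1 0 *m A) = A.
Proof.
move=> hu; apply/matrixP => r c; rewrite !DmxE0.
by case: (r == ord0); rewrite // mulrA mulrV ?mul1r.
Qed.

Lemma Dunit u A : u \is a GRing.unit -> (Dmx k u 0 *m A \in unitmx) = (A \in unitmx).
Proof.
move=> hu; rewrite unitmx_mul.
suff -> : Dmx k u 0 \in unitmx by [].
have h : Dmx k u 0 *m Dmx k u^-1 0 = 1%:M by rewrite -[Dmx k u^-1 0]mulmx1 DD.
by case/mulmx1_unit: h.
Qed.


Variable L : 'M[R]_k -> Prop.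
Hypothesis L1 : L 1%:M.
Hypothesis LE : forall (a b : 'I_k) A, a != b -> L A -> L (Emx k a b 1 *m A).
Hypothesis LD : forall u A, u \is a GRing.unit -> L A -> L (Dmx k u 0 *m A).
Hypothesis hnat : forall t : R, exists n, t = n%:R.
Variable nu : R -> nat.
Hypothesis hnu : forall x y : R, y != 0 -> exists q, (nu (x - q * y) < nu y)%N.

Lemma LEt (a b : 'I_k) t A : a != b -> L A -> L (Emx k a b t *m A).
Proof.
move=> ab hA; have [n ->] := hnat t; elim: n => [|n IHn]; first by rewrite E0.
by rewrite mulrS -EE //; apply: LE.
Qed.

Lemma LEinv (a b : 'I_k) t A : a != b -> L (Emx k a b t *m A) -> L A.
Proof. by move=> ab h; rewrite -(E0 a b A) -(addNr t) -EE //; apply: LEt. Qed.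

Lemma LDinv u A : u \is a GRing.unit -> L (Dmx k u 0 *m A) -> L A.
Proof.
move=> hu h; have hu' : u^-1 \is a GRing.unit by rewrite unitrV.
rewrite -(@DD u^-1 A hu') invrK; exact: LD.
Qed.

Definition Inv j A := forall r c : 'I_k, (j <= c)%N -> A r c = (r == c)%:R.
Definition Claim j := forall A, A \in unitmx -> Inv j A -> L A.

Lemma claim0 : Claim 0.
Proof.
move=> A _ hA; suff -> : A = 1%:M by [].
by apply/matrixP => r c; rewrite hA // mxE.
Qed.

Lemma InvE j (a b : 'I_k) t A : (b <= j)%N -> Inv j.+1 A -> Inv j.+1 (Emx k a b t *m A).
Proof.
move=> hb hA; rewrite /Inv => r c hc; rewrite EmxE hA //; case: (r == a); rewrite ?addr0 //.
rewrite hA //.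
have -> : (b == c) = false by apply/negbTE; rewrite -(inj_eq val_inj) /= neq_ltn (leq_ltn_trans hb hc).
by rewrite mulr0 addr0.
Qed.

Lemma InvD j u A : Inv j.+1 A -> Inv j.+1 (Dmx k u 0 *m A).
Proof.
move=> hA; rewrite /Inv => r c hc; rewrite DmxE0; case: eqP => [->|_]; rewrite hA //.
have -> : (ord0 == c) = false by apply/negbTE; rewrite -(inj_eq val_inj) /= neq_ltn (leq_ltn_trans _ hc).
by rewrite mulr0.
Qed.


Section Step.
Variable j : nat.
Variable jo : 'I_k.
Hypothesis hjo : val jo = j.
Hypothesis IH : Claim j.

Definition Pst (r : 'I_k) (x : R) A :=
  A r jo = x /\ forall s : 'I_k, (s <= j)%N -> s != r -> A s jo = 0.

Lemma clear A : A \in unitmx -> Inv j.+1 A -> Pst jo 1 A -> L A.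
Proof.
pose N (A : 'M[R]_k) := (\sum_(s < k) ((j < s)%N && (A s jo != 0%R)))%N.
have [n] := ubnP (N A); elim: n A => // n IHn A hN hu hI [h1 h0].
case: (boolP [exists s : 'I_k, (j < s)%N && (A s jo != 0)]) => [/existsP [s /andP [hs hnz]]|hno].
  have sj : s != jo by rewrite -(inj_eq val_inj) /= hjo gtn_eqF.
  have js : (jo == s) = false by rewrite eq_sym (negbTE sj).
  apply: (@LEinv s jo (- A s jo)) => //; apply: IHn.
  - rewrite ltnS in hN; apply: leq_trans hN.
    rewrite /N (bigD1 s) //= [in X in (_ < X)%N](bigD1 s) //= hs hnz /=.
    rewrite EmxE eqxx h1 mulr1 subrr eqxx /= add0n.
    under eq_bigr => i ni do rewrite EmxE (negbTE ni) addr0.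
    by [].
  - by rewrite Eunit.
  - by apply: InvE => //; rewrite hjo.
  - split; first by rewrite EmxE js addr0.
    move=> s' hs' ns'; rewrite EmxE h0 //.
    have -> : (s' == s) = false by apply/negbTE; rewrite -(inj_eq val_inj) /= ltn_eqF // (leq_ltn_trans hs' hs).
    by rewrite addr0.
apply: IH => //; rewrite /Inv => r c hc.
rewrite leq_eqVlt in hc; case/orP: hc => [/eqP ec|hc]; last exact: hI.
have -> : c = jo by apply: val_inj; rewrite /= hjo ec.
case: (leqP r j) => hr.
  case: (eqVneq r jo) => [->|nr]; first by rewrite h1.
  by rewrite h0 // (negbTE nr).
move/existsPn: hno => /(_ r); rewrite hr /= negbK => /eqP ->.
have -> : (r == jo) = false by rewrite -(inj_eq val_inj) /= hjo gtn_eqF.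
by [].
Qed.

Lemma move (r0 r1 : 'I_k) x : (r0 <= j)%N -> (r1 <= j)%N ->
  (forall A, A \in unitmx -> Inv j.+1 A -> Pst r1 x A -> L A) ->
  forall A, A \in unitmx -> Inv j.+1 A -> Pst r0 x A -> L A.
Proof.
move=> h0 h1 H A hu hI [hx hz].
case: (eqVneq r0 r1) => [e|ne]; first by apply: H => //; rewrite -e.
have ne' : r1 != r0 by rewrite eq_sym.
apply: (@LEinv r1 r0 1) => //; apply: (@LEinv r0 r1 (-1)) => //.
apply: H.
- by rewrite !Eunit.
- by apply: InvE => //; apply: InvE.
- split.
    by rewrite !EmxE (negbTE ne') eqxx (hz r1 h1 ne') hx addr0 add0r mul1r.
  move=> s hs ns; case: (eqVneq s r0) => [->|nr0].
    rewrite !EmxE !eqxx (negbTE ne) (hz r1 h1 ne') hx.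
    by rewrite !addr0 add0r mul1r mulN1r subrr.
  by rewrite !EmxE (negbTE nr0) (negbTE ns) !addr0 hz.
Qed.

Lemma scale : (forall A, A \in unitmx -> Inv j.+1 A -> Pst ord0 1 A -> L A) ->
  forall A u, u \is a GRing.unit -> A \in unitmx -> Inv j.+1 A -> Pst ord0 u A -> L A.
Proof.
move=> H A u hu hA hI [hx hz].
have hu' : u^-1 \is a GRing.unit by rewrite unitrV.
apply: (@LDinv u^-1) => //; apply: H.
- by rewrite Dunit.
- exact: InvD.
- split; first by rewrite DmxE0 eqxx hx mulVr.
  by move=> s hs ns; rewrite DmxE0 (negbTE ns) hz.
Qed.

Lemma fromOne A : A \in unitmx -> Inv j.+1 A ->
   (forall r s : 'I_k, (r <= j)%N -> (s <= j)%N -> A r jo != 0 -> A s jo != 0 -> r = s) -> L A.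
Proof.
move=> hu hI h1.
have hB : forall l : 'I_k, (j < l)%N -> invmx A jo l = 0.
  move=> l hl; have := congr1 (fun M : 'M[R]_k => M jo l) (mulVmx hu).
  rewrite !mxE (bigD1 l) //= hI // eqxx mulr1 big1 ?addr0.
    have -> : (jo == l) = false by rewrite -(inj_eq val_inj) /= hjo ltn_eqF.
    by [].
  by move=> q nq; rewrite hI // (negbTE nq) mulr0.
have hsum : \sum_(l < k) invmx A jo l * A l jo = 1.
  by have := congr1 (fun M : 'M[R]_k => M jo jo) (mulVmx hu); rewrite !mxE eqxx.
case: (boolP [exists r : 'I_k, (r <= j)%N && (A r jo != 0)]) => [/existsP [r0 /andP [hr0 hnz]]|hno].
  have hunit : A r0 jo \is a GRing.unit.
    have e : invmx A jo r0 * A r0 jo = 1.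
      rewrite -hsum (bigD1 r0) //= big1 ?addr0 // => l nl.
      case: (leqP l j) => hl; last by rewrite hB // mul0r.
      case: (eqVneq (A l jo) 0) => [->|nz]; first by rewrite mulr0.
      by rewrite (h1 _ _ hl hr0 nz hnz) eqxx in nl.
    by apply/unitrP; exists (invmx A jo r0); split => //; rewrite mulrC.
  apply: (@move r0 ord0 (A r0 jo)) => //.
    move=> A' hu' hI' hP; apply: (scale _ hunit hu' hI' hP).
    move=> A'' hu'' hI'' hP''; apply: (@move ord0 jo 1) => //.
    by rewrite hjo.
    exact: clear.
  split => // s hs ns; case: (eqVneq (A s jo) 0) => // nz.
  by rewrite (h1 _ _ hs hr0 nz hnz) eqxx in ns.
exfalso; move: hsum; rewrite big1.
  by move/eqP; rewrite eq_sym oner_eq0.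
move=> l _; case: (leqP l j) => hl; last by rewrite hB // mul0r.
move/existsPn: hno => /(_ l); rewrite hl /= negbK => /eqP ->.
by rewrite mulr0.
Qed.

Lemma euclid : Claim j.+1.
Proof.
pose mu (A : 'M[R]_k) := (\sum_(s < k) (if (s <= j)%N then nu (A s jo) else 0))%N.
move=> A; have [n] := ubnP (mu A); elim: n A => // n IHn A hmu hu hI.
case: (boolP [exists r : 'I_k, exists s : 'I_k,
   [&& (r <= j)%N, (s <= j)%N, r != s, A r jo != 0 & A s jo != 0]]); last first.
  move=> hno; apply: fromOne => // r s hr hs nr ns.
  apply/eqP; apply: contraNT hno => nrs; apply/existsP; exists r; apply/existsP; exists s.
  by rewrite hr hs nrs nr ns.
move=> /existsP [r0 /existsP [s0 /and5P [hr0 hs0 nrs0 nr0 ns0]]].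
have [r [s [hr hs nrs ns hle]]] : exists r s : 'I_k, [/\ (r <= j)%N, (s <= j)%N, r != s,
    A s jo != 0 & (nu (A s jo) <= nu (A r jo))%N].
  case: (leqP (nu (A s0 jo)) (nu (A r0 jo))) => h; first by exists r0, s0; split.
  by exists s0, r0; split => //; [rewrite eq_sym | apply: ltnW].
have [q hq] := hnu (A r jo) ns.
apply: (@LEinv r s (- q)) => //; apply: IHn.
- rewrite ltnS in hmu; apply: leq_trans hmu.
  have e : forall i : 'I_k, i != r -> (Emx k r s (-q) *m A) i jo = A i jo.
    by move=> i ni; rewrite EmxE (negbTE ni) addr0.
  have er : (Emx k r s (-q) *m A) r jo = A r jo - q * A s jo by rewrite EmxE eqxx mulNr.
  rewrite /mu (bigD1 r) //= [in X in (_ < X)%N](bigD1 r) //= hr er.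
  rewrite (eq_bigr (fun i : 'I_k => if (i <= j)%N then nu (A i jo) else 0)%N); last by move=> i ni; rewrite e.
  by rewrite ltn_add2r; exact: leq_trans hq hle.
- by rewrite Eunit.
- exact: InvE.
Qed.

End Step.

Lemma claim_all j : (j <= k)%N -> Claim j.
Proof.
elim: j => [|j IHj] hj; first exact: claim0.
exact: (@euclid j (Ordinal hj) erefl (IHj (ltnW hj))).
Qed.

Theorem all_L A : A \in unitmx -> L A.
Proof.
move=> hA; apply: (claim_all (leqnn k)) => //; rewrite /Inv => r c hc.
by move: (ltn_ord c); rewrite ltnNge hc.
Qed.

End Elim.

Section Main.
Variables m' n' : nat.
Local Notation m := m'.+2.
Local Notation n := n'.+2.
Local Notation R := 'Z_m.
Variable i : 'I_n'.+1.
Local Notation H := (<<@AGL_gens m n i>>%g).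
Local Notation GT := {'GL_n[R]}.

Definition Lp (M : 'M[R]_n'.+2) := exists2 y : GT, y \in H & GLval y = M.

Lemma LpM M N : Lp M -> Lp N -> Lp (M *m N).
Proof. by move=> [y hy <-] [z hz <-]; exists (y * z)%g; [exact: groupM | rewrite GL_MxE]. Qed.

Lemma Lp1 : Lp 1%:M.
Proof. by exists 1%g; [exact: group1 | rewrite GL_1E]. Qed.

Lemma gmx_unit (A : 'M[R]_n'.+1) v : A \in unitmx -> gmx A v \in unitmx.
Proof.
move=> hA; have h : gmx A v *m gmx (invmx A) (- (invmx A *m v)) = 1%:M.
  by rewrite gmxM mulmxV // mulmxN mulmxA mulmxV // mul1mx addNr gmx1.
by case/mulmx1_unit: h.
Qed.

Lemma mkGL (A : 'M[R]_n'.+1) v : A \in unitmx -> exists y : GT, GLval y = gmx A v.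
Proof. by move=> hA; exists (Sub (gmx A v) (gmx_unit v hA)). Qed.


Local Notation L := (fun A : 'M[R]_n'.+1 => Lp (gmx A 0)).

Lemma Lgen y M : y \in @AGL_gens m n i -> GLval y = M -> Lp M.
Proof. by move=> hy <-; exists y => //; exact: mem_gen. Qed.

Lemma hLE (a b : 'I_n'.+1) A : a != b -> L A -> L (Emx n'.+1 a b 1 *m A).
Proof.
move=> ab hA /=.
have hu : Emx n'.+1 a b (1 : R) \in unitmx by rewrite -[Emx _ _ _ _]mulmx1 Eunit // unitmx1.
have [y hy] := mkGL 0 hu.
have : Lp (gmx (Emx n'.+1 a b 1) 0).
  apply: (Lgen _ hy); rewrite inE; apply/orP; left; apply/orP; right.
  by apply/existsP; exists a; apply/existsP; exists b; rewrite ab hy eqxx.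
by move/LpM => /(_ _ hA); rewrite gmxM mulmx0 addr0.
Qed.

Lemma hLD u A : u \is a GRing.unit -> L A -> L (Dmx n'.+1 u 0 *m A).
Proof.
move=> hu' hA /=.
have hu : Dmx n'.+1 u 0 \in unitmx by rewrite -[Dmx _ _ _]mulmx1 Dunit // unitmx1.
have [y hy] := mkGL 0 hu.
have : Lp (gmx (Dmx n'.+1 u 0) 0).
  apply: (Lgen _ hy); rewrite inE; apply/orP; right.
  by apply/existsP; exists u; rewrite hu' hy eqxx.
by move/LpM => /(_ _ hA); rewrite gmxM mulmx0 addr0.
Qed.

Lemma hL1 : L 1%:M.
Proof. by rewrite /= gmx1; exact: Lp1. Qed.

Lemma hnat (t : R) : exists k, t = k%:R.
Proof. by exists (val t); rewrite natr_Zp. Qed.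

Lemma hnu (x y : R) : y != 0 -> exists q : R, (nat_of_ord (x - q * y)%R < nat_of_ord y)%N.
Proof.
move=> y0; exists ((x %/ y)%N%:R).
have e : x - (x %/ y)%N%:R * y = (x %% y)%N%:R.
  rewrite -{1}[x]natr_Zp {1}(divn_eq x y) natrD natrM natr_Zp.
  by rewrite addrAC subrr add0r.
rewrite e val_Zp_nat // modn_small; last exact: leq_ltn_trans (leq_mod _ _) (ltn_ord x).
by rewrite ltn_pmod // lt0n.
Qed.

Lemma allL A : A \in unitmx -> L A.
Proof.
exact: (@all_L R n' L hL1 hLE hLD hnat (fun x : R => nat_of_ord x) hnu).
Qed.


Local Notation V := (fun w : 'cV[R]_n'.+1 => Lp (gmx 1%:M w)).

Lemma V0 : V 0.
Proof. by rewrite /= gmx1; exact: Lp1. Qed.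

Lemma VD w1 w2 : V w1 -> V w2 -> V (w1 + w2).
Proof. by move=> h1 h2 /=; have := LpM h1 h2; rewrite gmxM mulmx1 mul1mx addrC. Qed.

Lemma VA A w : A \in unitmx -> V w -> V (A *m w).
Proof.
move=> hA hw /=.
have hAi : invmx A \in unitmx by rewrite unitmx_inv.
have := LpM (LpM (allL hA) hw) (allL hAi).
by rewrite !gmxM mulmx1 mulmxV // mulmx0 !addr0 add0r => h.
Qed.

Lemma Vn w k : V w -> V (w *+ k).
Proof.
move=> hw; elim: k => [|k IHk]; first by rewrite mulr0n; exact: V0.
by rewrite mulrS; apply: VD.
Qed.

Lemma Vi : V (delta_mx i 0).
Proof.
have hu : (1%:M : 'M[R]_n'.+1) \in unitmx by rewrite unitmx1.
have [y hy] := mkGL (delta_mx i 0) hu.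
apply: (Lgen _ hy); rewrite inE; apply/orP; left; apply/orP; left.
by rewrite hy.
Qed.

Lemma tperm_delta (j : 'I_n'.+1) (c : 'I_1) :
  tperm_mx i j *m delta_mx i c = delta_mx j c :> 'cV[R]_n'.+1.
Proof.
apply/matrixP => r d; rewrite (ord1 d) (ord1 c) -colE !mxE /=.
have -> : (tperm i j r == i) = (r == j) by rewrite -{2}[i](tpermR i j) (inj_eq perm_inj).
by rewrite eqxx andbT.
Qed.

Lemma Vall w : V w.
Proof.
rewrite (matrix_sum_delta w); apply: (big_ind V V0 VD) => j _.
apply: (big_ind V V0 VD) => c _.
rewrite -[w j c]natr_Zp scaler_nat; apply: Vn.
rewrite -tperm_delta; apply: VA; first exact: unitmx_perm.
by rewrite (ord1 c); exact: Vi.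
Qed.

End Main.

Theorem lemma3p6 (m n : nat) (hm : (2 <= m)%N) (hn : (2 <= n)%N) (i : 'I_(n.-1)) :
  <<@AGL_gens m n i>>%g = AGL m n.
Proof.
case: m hm => [|[|m']] // _; case: n hn i => [|[|n']] // _ i.
apply/eqP; rewrite eqEsubset; apply/andP; split.
- have gA : group_set (AGL m'.+2 n'.+2).
    apply/group_setP; split.
      rewrite inE; apply/existsP; exists 1%:M; apply/existsP; exists 0.
      rewrite unitmx1 GL_1E /=; apply/eqP; symmetry; exact: gmx1.
    move=> x y; rewrite !inE => /existsP [A /existsP [v /andP [hA /eqP hx]]].
    move=> /existsP [B /existsP [w /andP [hB /eqP hy]]].
    apply/existsP; exists (A *m B); apply/existsP; exists (A *m w + v).
    rewrite unitmx_mul hA hB GL_MxE hx hy /=; apply/eqP; exact: gmxM.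
  have -> : AGL m'.+2 n'.+2 = Group gA by [].
  rewrite gen_subG; apply/subsetP => x; rewrite inE.
  case/orP => [/orP [/eqP hx | /existsP [a /existsP [b /andP [ab /eqP hx]]]] | /existsP [u /andP [hu /eqP hx]]];
    rewrite inE; apply/existsP.
  + exists 1%:M; apply/existsP; exists (evec 'Z_m'.+2 i); rewrite unitmx1 /=; exact/eqP.
  + exists (Emx n'.+1 a b 1); apply/existsP; exists 0.
    by rewrite hx eqxx andbT -[Emx _ _ _ _]mulmx1 Eunit // unitmx1.
  + exists (Dmx n'.+1 u 0); apply/existsP; exists 0.
    by rewrite hx eqxx andbT -[Dmx _ _ _]mulmx1 Dunit // unitmx1.
- apply/subsetP => x; rewrite inE => /existsP [A /existsP [v /andP [hA /eqP hx]]].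
  have : Lp i (gmx A v).
    have -> : gmx A v = gmx 1%:M v *m gmx A 0 by rewrite gmxM mul1mx mulmx0 add0r.
    exact: LpM (Vall i v) (allL i hA).
  by case=> y hy hyx; have -> : x = y by apply: val_inj; rewrite /= hx hyx.
Qed.
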